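(* Let $b\ge 0$ and $h\ge 2b+1$ be integers. Let $K$ be the complete directed graph (without self-loops) on a set $H$ of $h$ vertices, i.e. $(i,j)$ is an edge for all distinct $i,j\in H$. Let $R$ be any graph obtained from $K$ by deleting, for each vertex, an arbitrary set of $b$ of its incoming edges. Then $R$ contains a source component, i.e. a vertex $v_0\in H$ having a directed path in $R$ to every other vertex of $H$.
   Context: In the paper's setting, $H$ is the set of honest nodes among $m=h+b$ nodes with $b<\frac{1}{3}m$ (so $h\ge 2b+1$), and a graph $R$ as in the claim is called a reduced graph (of the complete graph on all $m$ nodes, after deleting the $b$ Byzantine nodes with their edges). *)

(* Defs.v *)
From mathcomp Require Import all_boot.
Set Implicit Arguments. Unset Strict Implicit. Unset Printing Implicit Defensive.

(* A directed graph on the finite vertex type T is a relation R : rel T;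
   R i j means there is an edge (i,j) from i to j.
   The complete directed graph without self-loops has edges (i,j) for i != j. *)

(* The set of incoming edges of j that are deleted from the complete graph,
   represented by their sources. *)
Definition deleted_in (T : finType) (R : rel T) (j : T) : {set T} :=
  [set i | (i != j) && ~~ R i j].

Definition reduced_graph (T : finType) (b : nat) (R : rel T) : Prop :=
  (forall i j, R i j -> i != j) /\ (forall j, #|deleted_in R j| = b).

Definition source_vertex (T : finType) (R : rel T) (v0 : T) : Prop :=
  forall v, connect R v0 v.

(* Main.v *)
Require Import Defs.
From mathcomp Require Import all_boot.
From mathcomp Require Import zify.

Theorem lemma1 (b h : nat) (T : finType) (R : rel T) :
  #|T| = h -> 2 * b + 1 <= h -> reduced_graph b R ->
  exists v0 : T, source_vertex R v0.
Proof.
move=> hT hb [_ hdel].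
pose A u := [set w | (w == u) || R w u].
have cA : forall u, #|A u| + b = h.
  move=> u; rewrite -(hdel u) -hT -(cardsC (A u)); congr (_ + _).
  apply: eq_card => w; rewrite !inE.
  by case: (w =P u) => [->|_]; case: (R w u).
have pair : forall u v, exists w, connect R w u && connect R w v.
  move=> u v.
  have : 0 < #|A u :&: A v|.
    have H1 := cardsU (A u) (A v).
    have H2 : #|A u :|: A v| <= #|T| by apply: max_card.
    have := cA u; have := cA v; lia.
  case/card_gt0P => w; rewrite !inE => /andP [hu hv]; exists w.
  apply/andP; split.
    case/orP: hu => [/eqP->|e]; [exact: connect0 | exact: connect1].
  case/orP: hv => [/eqP->|e]; [exact: connect0 | exact: connect1].
have /card_gt0P [x0 _] : 0 < #|T| by lia.
have gen : forall s : seq T, exists w, all (connect R w) s.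
  elim=> [|x s [w IH]]; first by exists x0.
  have [w' /andP [h1 h2]] := pair w x.
  exists w'; rewrite /= h2 /=; apply/allP => y ys.
  exact: connect_trans h1 (allP IH y ys).
have [w hw] := gen (enum T).
exists w => v; apply: (allP hw); by rewrite mem_enum.
Qed.
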